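(* Let $k\leq n$ be positive integers. Suppose that for every $v\in\mathbb{R}^n$ with pairwise distinct coordinates not summing to $0$, and every hyperplane $H\subset\mathbb{R}^n$ through the origin, $|H\cap S_nv|\leq n!/k$. Then for every $m\geq n$, every $v\in\mathbb{R}^m$ with pairwise distinct coordinates not summing to $0$, and every hyperplane $H\subset\mathbb{R}^m$ through the origin, $|H\cap S_mv|\leq m!/k$. In particular, if $n\geq 3$ is odd and $\max_{v,H}|H\cap S_nv|=(n-1)!$ (maximum over $v\in\mathbb{R}^n$ with distinct coordinates not summing to $0$ and hyperplanes $H$ through the origin), then $\max_{v,H}|H\cap S_{n+1}v|=(n+1)(n-1)!$ (maximum over $v\in\mathbb{R}^{n+1}$ with distinct coordinates not summing to $0$ and hyperplanes $H\subset\mathbb{R}^{n+1}$ through the origin).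
   Context: The symmetric group $S_n$ acts on $\mathbb{R}^n$ by permuting coordinates; $S_nv$ denotes the orbit of $v$. *)

(* Defs.v *)
From HB Require Import structures.
From mathcomp Require Import all_boot all_order all_algebra all_fingroup.
From mathcomp Require Import reals.
Set Implicit Arguments. Unset Strict Implicit. Unset Printing Implicit Defensive.
Import Order.TTheory GRing.Theory Num.Theory.
Local Open Scope ring_scope.

Definition permv (R : realType) (n : nat) (s : 'S_n) (v : 'rV[R]_n) : 'rV[R]_n :=
  \row_i v ord0 (s i).

Definition admissible (R : realType) (n : nat) (v : 'rV[R]_n) : Prop :=
  injective (fun i : 'I_n => v ord0 i) /\ \sum_(i < n) v ord0 i != 0.

Definition inH (R : realType) (n : nat) (a : 'rV[R]_n) (x : 'rV[R]_n) : bool :=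
  \sum_(i < n) a ord0 i * x ord0 i == 0.

Definition orbit_pts (R : realType) (n : nat) (v : 'rV[R]_n) : seq 'rV[R]_n :=
  undup [seq permv s v | s : 'S_n].

Definition hcount (R : realType) (n : nat) (a v : 'rV[R]_n) : nat :=
  size [seq x <- orbit_pts v | inH a x].

(* For all admissible v and all hyperplanes H through 0 of R^n: |H ∩ S_n v| <= n!/k
   (stated multiplicatively in nat: k * |H ∩ S_n v| <= n!). *)
Definition bound_k (R : realType) (n k : nat) : Prop :=
  forall (v a : 'rV[R]_n), admissible v -> a != 0 -> (k * hcount a v <= n`!)%N.

Definition max_is (R : realType) (n M : nat) : Prop :=
  (forall (v a : 'rV[R]_n), admissible v -> a != 0 -> (hcount a v <= M)%N) /\
  (exists (v a : 'rV[R]_n), [/\ admissible v, a != 0 & hcount a v = M]).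

(* Main.v *)
Require Import Defs.
From HB Require Import structures.
From mathcomp Require Import all_boot all_order all_algebra all_fingroup.
From mathcomp Require Import reals ring.
Set Implicit Arguments. Unset Strict Implicit. Unset Printing Implicit Defensive.
Import Order.TTheory GRing.Theory Num.Theory.
Local Open Scope ring_scope.

Definition N (R : realType) n (a v : 'rV[R]_n) : nat :=
  (\sum_(s : 'S_n) (inH a (permv s v) : nat))%N.

Lemma hcountE (R : realType) n (a v : 'rV[R]_n) :
  injective (fun i => v ord0 i) -> hcount a v = N a v.
Proof.
move=> vinj; rewrite /hcount /orbit_pts undup_id; last first.
  rewrite map_inj_uniq ?enum_uniq // => s t /rowP e; apply/permP => i.
  by apply: vinj; have := e i; rewrite !mxE.
rewrite size_filter count_map /N -sum1_count big_mkcond /= big_enum /=.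
by apply: eq_bigr => s _; case: ifP.
Qed.
Lemma sum_fix n (i j : 'I_n.+1) (F : 'S_n.+1 -> nat) :
  (\sum_(s : 'S_n.+1 | s i == j) F s = \sum_(t : 'S_n) F (lift_perm i j t))%N.
Proof.
rewrite (reindex (lift_perm i j)); last first.
  pose ulsf i (s : 'S_n.+1) k := odflt k (unlift (s i) (s (lift i k))).
  have ulsfK i' (s : 'S_n.+1) k: lift (s i') (ulsf i' s k) = s (lift i' k).
    rewrite /ulsf; have:= neq_lift i' k.
    by rewrite -(can_eq (permK s)) => /unlift_some[] ? ? ->.
  have inj_ulsf: injective (ulsf i _).
    move=> s; apply: can_inj (ulsf (s i) s^-1%g) _ => k'.
    by rewrite {1}/ulsf ulsfK !permK liftK.
  exists (fun s => perm (inj_ulsf s)) => [s _ | s].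
    by apply/permP=> k'; rewrite permE /ulsf lift_perm_lift lift_perm_id liftK.
  move/(s _ =P _) => si0; apply/permP=> k.
  case: (unliftP i k) => [k'|] ->; rewrite ?lift_perm_id //.
  by rewrite lift_perm_lift -si0 permE ulsfK.
by apply: eq_bigl => t; rewrite lift_perm_id eqxx.
Qed.

Lemma split_i n (i : 'I_n.+1) (F : 'S_n.+1 -> nat) :
  (\sum_(s : 'S_n.+1) F s = \sum_(j : 'I_n.+1) \sum_(t : 'S_n) F (lift_perm i j t))%N.
Proof.
rewrite (partition_big (fun s : 'S_n.+1 => s i) predT) //=.
by apply: eq_bigr => j _; rewrite -sum_fix.
Qed.

Lemma split_j n (j : 'I_n.+1) (F : 'S_n.+1 -> nat) :
  (\sum_(s : 'S_n.+1) F s = \sum_(i : 'I_n.+1) \sum_(t : 'S_n) F (lift_perm i j t))%N.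
Proof.
rewrite (partition_big (fun s : 'S_n.+1 => (s^-1)%g j) predT) //=.
apply: eq_bigr => i _; rewrite -sum_fix; apply: eq_bigl => s /=.
apply/eqP/eqP => [<-|<-]; by rewrite ?permKV ?permK.
Qed.
Definition vsub (R : realType) m (v : 'rV[R]_m.+1) (j : 'I_m.+1) : 'rV[R]_m :=
  \row_l v ord0 (lift j l).
Definition bvec (R : realType) m (a v : 'rV[R]_m.+1) (i j : 'I_m.+1) : 'rV[R]_m :=
  \row_l (a ord0 (lift i l) + a ord0 i * v ord0 j / \sum_l' v ord0 (lift j l')).

Lemma sum_perm (R : realType) n (F : 'I_n -> R) (s : 'S_n) :
  \sum_l F (s l) = \sum_l F l.
Proof. by rewrite [RHS](reindex_inj (@perm_inj _ s)). Qed.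

Lemma key (R : realType) m (a v : 'rV[R]_m.+1) (i j : 'I_m.+1) (t : 'S_m) :
  \sum_l v ord0 (lift j l) != 0 ->
  inH a (permv (lift_perm i j t) v) = inH (bvec a v i j) (permv t (vsub v j)).
Proof.
move=> S0; rewrite /inH; congr (_ == 0).
rewrite (bigD1_ord i) //= /permv /bvec /vsub !mxE lift_perm_id.
under eq_bigr do rewrite !mxE lift_perm_lift.
under [RHS]eq_bigr do rewrite !mxE mulrDl.
rewrite big_split /= addrC; congr (_ + _).
rewrite -mulr_sumr (sum_perm (fun l => v ord0 (lift j l))).
by rewrite divfK.
Qed.
Lemma const_val (R : realType) m (a v : 'rV[R]_m.+1) (i : 'I_m.+1) d (s : 'S_m.+1) :
  (forall l, a ord0 (lift i l) = d) ->
  \sum_l a ord0 l * permv s v ord0 l =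
  (a ord0 i - d) * v ord0 (s i) + d * \sum_l v ord0 l.
Proof.
move=> Ha; rewrite (bigD1_ord i) //= /permv !mxE.
under eq_bigr do rewrite !mxE Ha.
rewrite -mulr_sumr -(sum_perm (fun l => v ord0 l) s) (bigD1_ord i) //=.
ring.
Qed.

Lemma const_case (R : realType) m (a v : 'rV[R]_m.+1) (i : 'I_m.+1) d :
  (forall l, a ord0 (lift i l) = d) -> a != 0 -> \sum_l v ord0 l != 0 ->
  injective (fun l => v ord0 l) -> (N a v <= m`!)%N.
Proof.
move=> Ha a0 S0 vinj.
case: (boolP [exists s, inH a (permv s v)]) => [/existsP[s0 Hs0] | /existsPn H0]; last first.
  by rewrite /N big1 // => s _; rewrite (negbTE (H0 s)).
have E : forall s, inH a (permv s v) -> s i = s0 i.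
  move=> s Hs; move: Hs Hs0; rewrite /inH !(const_val _ _ Ha).
  have [ed|nd] := eqVneq (a ord0 i - d) 0.
    rewrite ed !mul0r !add0r mulf_eq0 (negbTE S0) orbF => /eqP d0 _.
    case/eqP: a0; apply/rowP => l; rewrite !mxE.
    case: (unliftP i l) => [l'|] ->; first by rewrite Ha.
    by move/eqP: ed; rewrite d0 subr0 => /eqP.
  set c := d * _.
  move=> /eqP e1 /eqP e2; apply: vinj => /=.
  apply: (mulfI nd); apply: (addIr c); by rewrite e1 e2.
apply: (@leq_trans (\sum_(s : 'S_m.+1) (s i == s0 i : nat))).
  by apply: leq_sum => s _; case H: (inH _ _) => //=; rewrite (E s H) eqxx.
rewrite (_ : (\sum_s _ = \sum_(s : 'S_m.+1 | s i == s0 i) 1)%N); last first.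
  rewrite [RHS]big_mkcond /=; apply: eq_bigr => s _; by case: eqP.
rewrite sum_fix sum1_card.
change (#|'S_m| <= m`!)%N; by rewrite card_Sn.
Qed.

Lemma step (R : realType) m k :
  (0 < k)%N -> (k <= m)%N -> bound_k R m k -> bound_k R m.+1 k.
Proof.
case: m => [|m]; first by move=> k0 km; have := leq_trans k0 km.
move=> k0 km Hb v a [vinj S0] a0; rewrite hcountE //.
have [j Sj] : exists j : 'I_m.+2, \sum_l v ord0 (lift j l) != 0.
  have E j : \sum_l v ord0 (lift j l) = \sum_l v ord0 l - v ord0 j.
    by rewrite [X in _ = X - _](bigD1_ord j) //= addrC addrK.
  case: (eqVneq (v ord0 ord0) (\sum_l v ord0 l)) => h.
    exists (lift ord0 ord0); rewrite E subr_eq0 -h; apply/eqP => /vinj.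
    by move/(congr1 val).
  by exists ord0; rewrite E subr_eq0 eq_sym.
case: (boolP [forall i, bvec a v i j != 0]) => [/forallP Hall | /forallPn [i /negPn /eqP bi0]].
  rewrite /N (split_j j).
  apply: (@leq_trans (\sum_(i < m.+2) m.+1`!)); last first.
    by rewrite sum_nat_const card_ord factS.
  rewrite big_distrr /=; apply: leq_sum => i _.
  rewrite (eq_bigr (fun t => inH (bvec a v i j) (permv t (vsub v j)) : nat)); last first.
    by move=> t _; rewrite key.
  have adm : admissible (vsub v j).
    split; first by move=> x y; rewrite /vsub !mxE => /vinj/lift_inj.
    by rewrite /vsub; under eq_bigr do rewrite mxE.
  have := Hb (vsub v j) (bvec a v i j) adm (Hall i).
  by rewrite hcountE; case: adm.
have Ha l : a ord0 (lift i l) = - (a ord0 i * v ord0 j / \sum_l' v ord0 (lift j l')).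
  have := congr1 (fun M : 'rV[R]_m.+1 => M ord0 l) bi0; rewrite !mxE => /eqP.
  by rewrite addr_eq0 => /eqP.
have HN := const_case Ha a0 S0 vinj.
by rewrite factS; apply: leq_mul => //; apply: leqW.
Qed.
From mathcomp Require Import zify.
Lemma one_match p (j : 'I_p.+3) : odd p.+2 ->
  (\sum_(j' : 'I_p.+2) (j + lift j j' == p.+2 : nat))%N = 1%N.
Proof.
move=> op.
have xlt : (p.+2 - j < p.+3)%N by lia.
pose x : 'I_p.+3 := Ordinal xlt.
have xj : x != j.
  apply/negP => /eqP/(congr1 val) /= h.
  have hj : (j + j = p.+2)%N by have := ltn_ord j; lia.
  by move: op; rewrite -hj addnn odd_double.
case: (unliftP j x) xj => [y hy|->]; last by rewrite eqxx.
move=> _.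
have hv : (lift j y : nat) = (p.+2 - j)%N by rewrite -hy.
have E j' : (j + lift j j' == p.+2)%N = (j' == y).
  rewrite -(inj_eq (@lift_inj _ j)) -val_eqE /=.
  move: hv => /= hv; have hj := ltn_ord j; apply/eqP/eqP; lia.
under eq_bigr do rewrite E.
by rewrite (bigD1 y) //= eqxx big1 ?addn0 // => j' /negbTE ->.
Qed.
Definition exv (R : realType) p : 'rV[R]_p.+3 := \row_i (i%:R).
Definition exa (R : realType) p : 'rV[R]_p.+3 :=
  \row_i ((if (i < 2)%N then (p.+3)%:R else 0) - 2).

Lemma tri n : ((\sum_(l < n.+1) (l : nat)) * 2 = n.+1 * n)%N.
Proof.
elim: n => [|n IH]; first by rewrite big_ord1.
rewrite big_ord_recr /= mulnDl IH; lia.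
Qed.

Lemma ex_inH (R : realType) p (s : 'S_p.+3) :
  inH (exa R p) (permv s (exv R p)) = (s ord0 + s (lift ord0 ord0) == p.+2)%N.
Proof.
rewrite /inH /exa /exv /permv.
under eq_bigr do rewrite !mxE mulrBl.
rewrite sumrB -mulr_sumr (sum_perm (fun l : 'I_p.+3 => (l : nat)%:R)) -natr_sum.
rewrite big_ord_recl big_ord_recl big1; last first.
  by move=> i _; rewrite mul0r.
rewrite /= addr0 -mulrDr -natrD -natrM.
have -> : 2 * (\sum_(i < p.+3) (i : nat))%:R = (p.+3 * p.+2)%:R :> R.
  by rewrite -tri natrM mulrC.
by rewrite subr_eq0 eqr_nat eqn_pmul2l.
Qed.

Lemma ex_count (R : realType) p : odd p.+2 ->
  N (exa R p) (exv R p) = (p.+3 * p.+1`!)%N.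
Proof.
move=> op; rewrite /N.
under eq_bigr do rewrite ex_inH.
rewrite (split_i ord0).
have inner (j : 'I_p.+3) :
  (\sum_(t : 'S_p.+2) (lift_perm ord0 j t ord0 + lift_perm ord0 j t (lift ord0 ord0) == p.+2 : nat))%N = p.+1`!.
  under eq_bigr do rewrite lift_perm_id lift_perm_lift.
  rewrite (split_i ord0).
  under eq_bigr => j' _ do under eq_bigr => u _ do rewrite lift_perm_id.
  under eq_bigr => j' _ do rewrite sum_nat_const.
  rewrite -big_distrr /= one_match // muln1.
  by change (#|'S_p.+1| = p.+1`!)%N; rewrite card_Sn.
under eq_bigr do rewrite inner.
by rewrite sum_nat_const card_ord.
Qed.

Theorem proposition1p7 (R : realType) :
  (forall k n : nat, (0 < k)%N -> (k <= n)%N ->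
     bound_k R n k -> forall m : nat, (n <= m)%N -> bound_k R m k) /\
  (forall n : nat, (3 <= n)%N -> odd n ->
     max_is R n (n.-1)`! -> max_is R n.+1 (n.+1 * (n.-1)`!)%N).
Proof.
split.
  move=> k n k0 kn Hb m nm.
  have H d : bound_k R (d + n) k.
    elim: d => [|d IH] //; rewrite addSn; apply: step => //.
    exact: leq_trans kn (leq_addl _ _).
  by have := H (m - n)%N; rewrite subnK.
move=> n n3 on [Hmax _].
have [p np] : exists p, n = p.+2 by exists n.-2; lia.
subst n.
have Hb : bound_k R p.+2 p.+2.
  move=> v a av a0; have := Hmax v a av a0.
  by rewrite factS leq_mul2l => ->; rewrite orbT.
have Hb1 := step (ltn0Sn _) (leqnn _) Hb.
split.
  move=> v a av a0; have := Hb1 v a av a0.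
  by rewrite (factS p.+2) (factS p.+1) mulnCA leq_pmul2l.
exists (exv R p), (exa R p).
have adm : admissible (exv R p).
  split.
    move=> x y; rewrite /exv !mxE => /eqP; rewrite eqr_nat => /eqP.
    exact: val_inj.
  rewrite /exv; under eq_bigr do rewrite mxE.
  rewrite -natr_sum pnatr_eq0; apply/eqP => h.
  by have := tri p.+2; rewrite h.
split => //.
  apply/eqP => /rowP /(_ ord_max); rewrite !mxE /= sub0r => /eqP.
  by rewrite oppr_eq0 pnatr_eq0.
by rewrite hcountE; [rewrite ex_count | case: adm].
Qed.
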